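(* Let $\mathbf A=(A;\cdot,\to,\leadsto,1)$ be a pseudo-hoop and let $M\subseteq A$ be any subset. Define $f:M^\perp\times M^{\perp\perp}\to A$ by $f(x,y)=x\wedge y$. Then $f$ is injective and, for all $(x_1,y_1),(x_2,y_2)\in M^\perp\times M^{\perp\perp}$, $$f(x_1,y_1)\cdot f(x_2,y_2)=f(x_1\cdot x_2,\,y_1\cdot y_2),\quad f(x_1,y_1)\to f(x_2,y_2)=f(x_1\to x_2,\,y_1\to y_2),$$ $$f(x_1,y_1)\leadsto f(x_2,y_2)=f(x_1\leadsto x_2,\,y_1\leadsto y_2);$$ i.e. $f$ is an embedding of the direct product pseudo-hoop $M^\perp\times M^{\perp\perp}$ into $\mathbf A$.
   Context: A pseudo-hoop is an algebra $(A;\cdot,\to,\leadsto,1)$ of type $\langle 2,2,2,0\rangle$ such that for all $x,y,z\in A$: $x\cdot 1=x=1\cdot x$; $x\to x=1=x\leadsto x$; $(x\cdot y)\to z=x\to(y\to z)$; $(x\cdot y)\leadsto z=y\leadsto(x\leadsto z)$; and $(x\to y)\cdot x=(y\to x)\cdot y=x\cdot(x\leadsto y)=y\cdot(y\leadsto x)$. Setting $x\le y$ iff $x\to y=1$ (equivalently $x\leadsto y=1$) gives a partial order with greatest element $1$ in which $x\wedge y=(x\to y)\cdot x$ exists for all $x,y$. For $x,y\in A$, ''$x\vee y=1$'' means that the supremum of $\{x,y\}$ exists and equals $1$. For $M\subseteq A$, $M^\perp=\{x\in A\mid x\vee y=1\text{ for every }y\in M\}$ and $M^{\perp\perp}=(M^\perp)^\perp$.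 The sets $M^\perp$ and $M^{\perp\perp}$ contain $1$ and are closed under $\cdot,\to,\leadsto$, so $M^\perp\times M^{\perp\perp}$ is a pseudo-hoop with componentwise operations. *)

(* Defs.v *)
From Stdlib Require Import Classical.

Record PseudoHoop := {
  ph_car :> Type;
  ph_mul : ph_car -> ph_car -> ph_car;
  ph_imp : ph_car -> ph_car -> ph_car;
  ph_limp : ph_car -> ph_car -> ph_car;
  ph_one : ph_car;
  ph_mul1r : forall x, ph_mul x ph_one = x;
  ph_mul1l : forall x, ph_mul ph_one x = x;
  ph_impxx : forall x, ph_imp x x = ph_one;
  ph_limpxx : forall x, ph_limp x x = ph_one;
  ph_imp_mul : forall x y z, ph_imp (ph_mul x y) z = ph_imp x (ph_imp y z);
  ph_limp_mul : forall x y z, ph_limp (ph_mul x y) z = ph_limp y (ph_limp x z);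
  ph_div1 : forall x y, ph_mul (ph_imp x y) x = ph_mul (ph_imp y x) y;
  ph_div2 : forall x y, ph_mul (ph_imp y x) y = ph_mul x (ph_limp x y);
  ph_div3 : forall x y, ph_mul x (ph_limp x y) = ph_mul y (ph_limp y x)
}.

Arguments ph_mul {p}. Arguments ph_imp {p}. Arguments ph_limp {p}. Arguments ph_one {p}.

Section Defs.
Variable A : PseudoHoop.

Definition ph_le (x y : A) : Prop := ph_imp x y = ph_one.

Definition ph_meet (x y : A) : A := ph_mul (ph_imp x y) x.

(* "x v y = 1": the supremum of {x,y} exists and equals 1, i.e. 1 is an upper
   bound of x,y (always true) and below every upper bound of x and y. *)
Definition join_is_one (x y : A) : Prop :=
  ph_le x ph_one /\ ph_le y ph_one /\
  forall u : A, ph_le x u -> ph_le y u -> ph_le ph_one u.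

Definition perp (M : A -> Prop) : A -> Prop :=
  fun x => forall y, M y -> join_is_one x y.

End Defs.

(* Main.v *)
Require Import Defs.

Section PH.
Variable A : PseudoHoop.
Local Notation "x ** y" := (@ph_mul A x y) (at level 40, left associativity).
Local Notation "x ==> y" := (@ph_imp A x y) (at level 55, right associativity).
Local Notation "x ~~> y" := (@ph_limp A x y) (at level 55, right associativity).
Local Notation one := (@ph_one A).
Local Notation le := (ph_le A).
Local Notation meet := (ph_meet A).

Lemma antisym (a b : A) : le a b -> le b a -> a = b.
Proof.
  unfold ph_le; intros H1 H2.
  rewrite <- (ph_mul1l A a), <- (ph_mul1l A b), <- H1 at 1. rewrite <- H2.
  apply ph_div1.
Qed.

Lemma one_imp (z : A) : one ==> z = z.
Proof.
  apply antisym; unfold ph_le.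
  - pose proof (ph_imp_mul A (one ==> z) one z) as H.
    rewrite ph_mul1r, ph_impxx in H. auto.
  - pose proof (ph_imp_mul A z one z) as H.
    rewrite ph_mul1r, ph_impxx in H. auto.
Qed.

Lemma one_limp_imp (x : A) : one ~~> x = one ==> x.
Proof.
  pose proof (ph_div2 A one x) as H. rewrite ph_mul1l in H.
  pose proof (ph_div1 A one x) as H2. rewrite ph_mul1r in H2.
  congruence.
Qed.

Lemma imp_one (x : A) : x ==> one = one.
Proof.
  pose proof (ph_imp_mul A (x ==> one) x one) as H.
  rewrite ph_impxx in H.
  pose proof (ph_div1 A one x) as H2. rewrite ph_mul1r, one_imp in H2.
  rewrite <- H2 in H. exact H.
Qed.

Lemma le_limp (a b : A) : le a b <-> a ~~> b = one.
Proof.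
  unfold ph_le; split; intro H.
  - assert (E : a ** (a ~~> b) = a).
    { rewrite ph_div3, <- ph_div2, H, ph_mul1l. reflexivity. }
    pose proof (ph_limp_mul A a (a ~~> b) b) as H2.
    rewrite E, ph_limpxx in H2. exact H2.
  - assert (E : (a ==> b) ** a = a).
    { rewrite ph_div2, ph_div3, H, ph_mul1r. reflexivity. }
    pose proof (ph_imp_mul A (a ==> b) a b) as H2.
    rewrite E, ph_impxx in H2. exact H2.
Qed.

Lemma le_trans (a b c : A) : le a b -> le b c -> le a c.
Proof.
  unfold ph_le; intros H1 H2.
  assert (E : a = (b ==> a) ** b).
  { rewrite <- ph_div1, H1, ph_mul1l. reflexivity. }
  rewrite E, ph_imp_mul, H2, imp_one. reflexivity.
Qed.

Lemma resid (a b c : A) : le (a ** b) c <-> le a (b ==> c).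
Proof. unfold ph_le; rewrite ph_imp_mul; tauto. Qed.

Lemma lresid (a b c : A) : le (b ** a) c <-> le a (b ~~> c).
Proof. rewrite !le_limp, ph_limp_mul; tauto. Qed.

Lemma residR (a b c : A) : le (a ** b) c -> le a (b ==> c).
Proof. apply resid. Qed.
Lemma lresidR (a b c : A) : le (b ** a) c -> le a (b ~~> c).
Proof. apply lresid. Qed.

Lemma residL (a b c : A) : le a (b ==> c) -> le (a ** b) c.
Proof. apply resid. Qed.
Lemma lresidL (a b c : A) : le a (b ~~> c) -> le (b ** a) c.
Proof. apply lresid. Qed.

Lemma le_one (a : A) : le a one.
Proof. apply imp_one. Qed.

Lemma mul_le_r (a b : A) : le (a ** b) b.
Proof. unfold ph_le. rewrite ph_imp_mul, ph_impxx. apply imp_one. Qed.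

Lemma mul_le_l (a b : A) : le (a ** b) a.
Proof. apply le_limp. rewrite ph_limp_mul, ph_limpxx. apply le_limp, le_one. Qed.

Lemma le_refl (a : A) : le a a.
Proof. apply ph_impxx. Qed.

Lemma le_one_eq (u : A) : le one u -> u = one.
Proof. unfold ph_le; rewrite one_imp; auto. Qed.

Lemma meet_le_l (a b : A) : le (meet a b) a.
Proof. unfold ph_meet. rewrite ph_div1. apply residL, le_refl. Qed.

Lemma meet_le_r (a b : A) : le (meet a b) b.
Proof. unfold ph_meet. apply residL, le_refl. Qed.

Lemma imp_mono (a b c : A) : le b c -> le (a ==> b) (a ==> c).
Proof.
  intro H. apply residR. eapply le_trans; [|exact H]. apply residL, le_refl.
Qed.

Lemma limp_mono (a b c : A) : le b c -> le (a ~~> b) (a ~~> c).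
Proof.
  intro H. apply lresidR. eapply le_trans; [|exact H]. apply lresidL, le_refl.
Qed.

Lemma mul_mono_l (p q a : A) : le p q -> le (p ** a) (q ** a).
Proof. intro H. apply residL. eapply le_trans; [exact H|]. apply residR, le_refl. Qed.

Lemma mul_mono_r (p q a : A) : le p q -> le (a ** p) (a ** q).
Proof. intro H. apply lresidL. eapply le_trans; [exact H|]. apply lresidR, le_refl. Qed.

Lemma meet_glb (a b c : A) : le c a -> le c b -> le c (meet a b).
Proof.
  intros Ha Hb.
  assert (E : c = (a ==> c) ** a).
  { rewrite <- ph_div1, Ha, ph_mul1l. reflexivity. }
  rewrite E at 1. unfold ph_meet. apply mul_mono_l, imp_mono, Hb.
Qed.

Lemma imp_meet (z a b : A) : z ==> meet a b = meet (z ==> a) (z ==> b).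
Proof.
  apply antisym.
  - apply meet_glb; apply imp_mono; [apply meet_le_l|apply meet_le_r].
  - apply (residR _ z _), meet_glb.
    + eapply le_trans; [apply mul_mono_l, meet_le_l|]. apply residL, le_refl.
    + eapply le_trans; [apply mul_mono_l, meet_le_r|]. apply residL, le_refl.
Qed.

Lemma limp_meet (z a b : A) : z ~~> meet a b = meet (z ~~> a) (z ~~> b).
Proof.
  apply antisym.
  - apply meet_glb; apply limp_mono; [apply meet_le_l|apply meet_le_r].
  - apply (lresidR _ z _), meet_glb.
    + eapply le_trans; [apply mul_mono_r, meet_le_l|]. apply lresidL, le_refl.
    + eapply le_trans; [apply mul_mono_r, meet_le_r|]. apply lresidL, le_refl.
Qed.

Lemma mul_assoc (a b c : A) : a ** b ** c = a ** (b ** c).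
Proof.
  assert (H : forall z, (a ** b ** c) ==> z = (a ** (b ** c)) ==> z).
  { intro z. rewrite !ph_imp_mul. reflexivity. }
  apply antisym; unfold ph_le; [rewrite H|rewrite <- H]; apply ph_impxx.
Qed.

Lemma join_sym (x y : A) : join_is_one A x y -> join_is_one A y x.
Proof. intros [H1 [H2 H3]]. split; [|split]; auto. Qed.

Lemma join_imp (x y : A) : join_is_one A x y -> y ==> x = x.
Proof.
  intros [_ [_ H]]. apply antisym.
  - apply le_limp. apply le_one_eq. apply H.
    + apply lresidR, mul_le_r.
    + apply lresidR, residL, le_refl.
  - apply residR, mul_le_l.
Qed.

Lemma join_limp (x y : A) : join_is_one A x y -> y ~~> x = x.
Proof.
  intros [_ [_ H]]. apply antisym.
  - apply le_one_eq. apply H.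
    + apply residR, mul_le_l.
    + apply residR, lresidL, le_refl.
  - apply lresidR, mul_le_r.
Qed.

Lemma join_up (a b y : A) : join_is_one A a y -> le a b -> join_is_one A b y.
Proof.
  intros [_ [_ H]] Hab. split; [apply le_one|split; [apply le_one|]].
  intros u Hb Hy. apply H; auto. eapply le_trans; eauto.
Qed.

Lemma join_mul (a b y : A) :
  join_is_one A a y -> join_is_one A b y -> join_is_one A (a ** b) y.
Proof.
  intros [_ [_ Ha]] [_ [_ Hb]]. split; [apply le_one|split; [apply le_one|]].
  intros u Hu Hy.
  assert (Hbu : le b u).
  { unfold ph_le. apply le_one_eq. apply Ha.
    - apply residR, Hu.
    - eapply le_trans; [exact Hy|]. apply residR, mul_le_l. }
  apply Hb; auto.
Qed.

Lemma perp_mul (N : A -> Prop) a b : perp A N a -> perp A N b -> perp A N (a ** b).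
Proof. intros Ha Hb y Hy. apply join_mul; auto. Qed.

Lemma perp_imp (N : A -> Prop) a b : perp A N b -> perp A N (a ==> b).
Proof. intros Hb y Hy. eapply join_up; [apply Hb, Hy|]. apply residR, mul_le_l. Qed.

Lemma perp_limp (N : A -> Prop) a b : perp A N b -> perp A N (a ~~> b).
Proof. intros Hb y Hy. eapply join_up; [apply Hb, Hy|]. apply lresidR, mul_le_r. Qed.

Lemma meet_join1 (x y : A) : join_is_one A x y -> meet x y = y ** x.
Proof. intro H. unfold ph_meet. rewrite join_imp; auto using join_sym. Qed.

Lemma meet_join2 (x y : A) : join_is_one A x y -> meet x y = x ** y.
Proof. intro H. unfold ph_meet. rewrite ph_div1, join_imp; auto. Qed.

End PH.

Theorem theorem4p2 (A : PseudoHoop) (M : A -> Prop) :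
  (forall x1 y1 x2 y2 : A,
     perp A M x1 -> perp A (perp A M) y1 ->
     perp A M x2 -> perp A (perp A M) y2 ->
     ph_meet A x1 y1 = ph_meet A x2 y2 -> x1 = x2 /\ y1 = y2) /\
  (forall x1 y1 x2 y2 : A,
     perp A M x1 -> perp A (perp A M) y1 ->
     perp A M x2 -> perp A (perp A M) y2 ->
     ph_mul (ph_meet A x1 y1) (ph_meet A x2 y2) = ph_meet A (ph_mul x1 x2) (ph_mul y1 y2) /\
     ph_imp (ph_meet A x1 y1) (ph_meet A x2 y2) = ph_meet A (ph_imp x1 x2) (ph_imp y1 y2) /\
     ph_limp (ph_meet A x1 y1) (ph_meet A x2 y2) = ph_meet A (ph_limp x1 x2) (ph_limp y1 y2)).
Proof.
  assert (J : forall x y, perp A M x -> perp A (perp A M) y -> join_is_one A x y).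
  { intros x y Hx Hy. apply join_sym, Hy, Hx. }
  split.
  - intros x1 y1 x2 y2 Hx1 Hy1 Hx2 Hy2 E.
    assert (X : forall x1 y1 x2 y2, perp A M x1 -> perp A (perp A M) y1 ->
              perp A M x2 -> perp A (perp A M) y2 ->
              ph_meet A x1 y1 = ph_meet A x2 y2 -> ph_le A x2 x1 /\ ph_le A y2 y1).
    { clear x1 y1 x2 y2 Hx1 Hy1 Hx2 Hy2 E.
      intros x1 y1 x2 y2 Hx1 Hy1 Hx2 Hy2 E. split.
      + apply le_trans with (ph_imp y2 (ph_meet A x1 y1)).
        * rewrite E, meet_join2 by auto. apply residR, le_refl.
        * apply le_trans with (ph_imp y2 x1); [apply imp_mono, meet_le_l|].
          rewrite (join_imp A x1 y2) by auto. apply le_refl.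
      + apply le_trans with (ph_imp x2 (ph_meet A x1 y1)).
        * rewrite E, meet_join1 by auto. apply residR, le_refl.
        * apply le_trans with (ph_imp x2 y1); [apply imp_mono, meet_le_r|].
          rewrite (join_imp A y1 x2) by (apply join_sym; auto). apply le_refl. }
    destruct (X _ _ _ _ Hx1 Hy1 Hx2 Hy2 E).
    destruct (X _ _ _ _ Hx2 Hy2 Hx1 Hy1 (eq_sym E)).
    split; apply antisym; auto.
  - intros x1 y1 x2 y2 Hx1 Hy1 Hx2 Hy2. split; [|split].
    + rewrite !meet_join2 by (apply J; auto using perp_mul).
      rewrite !mul_assoc. f_equal. rewrite <- !mul_assoc. f_equal.
      rewrite <- meet_join2, meet_join1 by auto. reflexivity.
    + rewrite (meet_join2 A x1 y1) by auto. rewrite ph_imp_mul.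
      rewrite imp_meet, (join_imp A x2 y1) by auto.
      rewrite imp_meet, (join_imp A (ph_imp y1 y2) x1)
        by (apply join_sym, J; auto using perp_imp).
      reflexivity.
    + rewrite (meet_join1 A x1 y1) by auto. rewrite ph_limp_mul.
      rewrite limp_meet, (join_limp A x2 y1) by auto.
      rewrite limp_meet, (join_limp A (ph_limp y1 y2) x1)
        by (apply join_sym, J; auto using perp_limp).
      reflexivity.
Qed.
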